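(* Let $F:\mathbb{R}^2\to\mathbb{R}^2$ be a CPwL map with $F(E(t))=E(r(t))$ for all $t\in[0,1]$, let $\mathcal E(x,y)=(E(x),E(y))$ and $\mathcal F(z_1,z_2)=(F(z_1),F(z_2))$, and set $z_n(x,y)=\mathcal F^n(\mathcal E(x,y))$ for $(x,y)\in[0,1]^2$. Then there exist constants $C_0,C_1>0$, depending only on the piecewise-affine complexities of $E$ and $F$, such that $z_n$ (as a function on $[0,1]^2$) is the restriction of a network in $\Upsilon_{C_0,\,C_1n}(\mathrm{ReLU};2,4)$ for every $n\ge0$.
   Context: For integers $W,L,d,N\ge 1$, $\Upsilon_{W,L}(\mathrm{ReLU};d,N)$ denotes the set of functions $\mathbb{R}^d\to\mathbb{R}^N$ realized (exactly) by fully connected feed-forward ReLU networks of width $W$ and depth $L$. CPwL means continuous piecewise linear. $r:[0,1]\to[0,1]$ is $r(t)=2t-\lfloor 2t\rfloor$ for $t\in[0,1)$, $r(1)=1$. $E:[0,1]\to\mathbb{R}^2$ is $E(t)=(3t,3t)$ for $0\le t\le\frac13$, $E(t)=(1,2-3t)$ for $\frac13\le t\le\frac23$, $E(t)=(3-3t,0)$ for $\frac23\le t\le1$. *)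

(* Defs.v *)
From HB Require Import structures.
From mathcomp Require Import all_boot all_order all_algebra.
From mathcomp Require Import all_classical all_reals all_analysis.
From mathcomp Require Import Rstruct Rstruct_topology.
From Stdlib Require Import Rdefinitions.
Set Implicit Arguments. Unset Strict Implicit. Unset Printing Implicit Defensive.
Import Order.TTheory GRing.Theory Num.Theory.
Local Open Scope ring_scope.

Notation RR := Rdefinitions.R.

Definition relu_vec (n : nat) (v : 'rV[RR]_n) : 'rV[RR]_n :=
  map_mx (fun a => Num.max a 0) v.

Fixpoint hidden (d W : nat) (A0 : 'M[RR]_(d, W)) (b0 : 'rV[RR]_W)
  (Ah : nat -> 'M[RR]_(W, W)) (bh : nat -> 'rV[RR]_W) (k : nat)
  (x : 'rV[RR]_d) : 'rV[RR]_W :=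
  match k with
  | 0 => relu_vec (x *m A0 + b0)
  | k'.+1 => relu_vec (hidden A0 b0 Ah bh k' x *m Ah k' + bh k')
  end.

(** Upsilon W L d N : functions R^d -> R^N realized exactly by a fully
    connected feed-forward ReLU network of width W and depth L
    (L hidden layers of W neurons each, followed by an affine output layer;
    depth 0 = affine map). *)
Definition Upsilon (W L d N : nat) (f : 'rV[RR]_d -> 'rV[RR]_N) : Prop :=
  match L with
  | 0 => exists (A : 'M[RR]_(d, N)) (b : 'rV[RR]_N), forall x, f x = x *m A + b
  | L'.+1 =>
      exists (A0 : 'M[RR]_(d, W)) (b0 : 'rV[RR]_W)
             (Ah : nat -> 'M[RR]_(W, W)) (bh : nat -> 'rV[RR]_W)
             (Ao : 'M[RR]_(W, N)) (bo : 'rV[RR]_N),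
        forall x, f x = hidden A0 b0 Ah bh L' x *m Ao + bo
  end.

Definition cpwl_pieces (k : nat) (F : 'rV[RR]_2 -> 'rV[RR]_2) : Prop :=
  continuous F /\
  exists (As : 'I_k -> 'M[RR]_(2, 2)) (bs : 'I_k -> 'rV[RR]_2),
    forall x, exists i : 'I_k, F x = x *m As i + bs i.

Definition vec2 (a b : RR) : 'rV[RR]_2 :=
  \row_(i < 2) (if i == 0 :> nat then a else b).

Definition rmap (t : RR) : RR :=
  if t < 1 then 2 * t - (Num.floor (2 * t))%:~R else 1.

(** The map E : [0,1] -> R^2 (formula extended to all of R; only its values
    on [0,1] are ever used). *)
Definition Emap (t : RR) : 'rV[RR]_2 :=
  if t <= 1/3 then vec2 (3 * t) (3 * t)
  else if t <= 2/3 then vec2 1 (2 - 3 * t)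
  else vec2 (3 - 3 * t) 0.

Definition zn (F : 'rV[RR]_2 -> 'rV[RR]_2) (n : nat) (x y : RR) : 'rV[RR]_4 :=
  row_mx (iter n F (Emap x)) (iter n F (Emap y)).
Arguments Upsilon W L d N f : clear implicits.

(* Main.v *)
Require Import Defs.
From mathcomp Require Import all_boot all_order all_algebra.
From mathcomp Require Import all_classical all_reals all_analysis.
From mathcomp Require Import Rstruct Rstruct_topology.
From mathcomp Require Import ring lra zify.
Import Order.TTheory GRing.Theory Num.Theory.
Local Open Scope ring_scope.

Definition relu (r : RR) : RR := Num.max r 0.
Definition mk7 (a0 a1 a2 a3 a4 a5 a6 : RR) : 'rV[RR]_7 :=
  \row_(i < 7) nth 0 [:: a0; a1; a2; a3; a4; a5; a6] i.
Definition roA (i j : nat) : RR :=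
  nth 0 (if j == 0%N then [:: 2; -2; -1; 1; 0; 0; -1] else [:: 0; 2; 0; 0; -1; 1; 0]) i.
Definition Ao : 'M[RR]_(7,2) := \matrix_(i < 7, j < 2) roA i j.

Lemma mul7Ao a0 a1 a2 a3 a4 a5 a6 :
  mk7 a0 a1 a2 a3 a4 a5 a6 *m Ao = vec2 (2*a0-2*a1-a2+a3-a6) (2*a1-a4+a5).
Proof.
apply/rowP => j; rewrite !mxE !big_ord_recr big_ord0 /= !mxE /roA.
case: j => -[|[|[|]]] ? /=; lra.
Qed.

Lemma relu7 a0 a1 a2 a3 a4 a5 a6 :
  relu_vec (mk7 a0 a1 a2 a3 a4 a5 a6) =
  mk7 (relu a0) (relu a1) (relu a2) (relu a3) (relu a4) (relu a5) (relu a6).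
Proof.
apply/rowP => j; rewrite !mxE.
by case: j => -[|[|[|[|[|[|[|]]]]]]] ? /=.
Qed.

Lemma rmapE s : 0 <= s <= 1 ->
  rmap s = if s < 1/2 then 2*s else if s < 1 then 2*s-1 else 1.
Proof.
move=> /andP[s0 s1]; rewrite /rmap.
case: (ltP s 1) => hs1.
- case: (ltP s (1/2)) => hs2.
  + rewrite (@floor_def _ _ 0); first by rewrite mulr0z subr0.
    rewrite add0r /=; apply/andP; split; rewrite ?mulr0z ?mulr1z; lra.
  + rewrite (@floor_def _ _ 1); first by rewrite mulr1z.
    apply/andP; split; rewrite ?mulr1z //; first lra.
    rewrite -[1+1]/(2%:Z) -[_%:~R]/(2%:R); lra.
- case: (ltP s (1/2)) => ?; [lra|done].
Qed.

Arguments vec2 (a b)%ring_scope.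

Lemma EmapE t : Emap t = if t <= 1/3 then vec2 (3*t) (3*t)
  else if t <= 2/3 then vec2 1 (2-3*t) else vec2 (3-3*t) 0.
Proof. by rewrite /Emap !RminusE !RmultE !IZRposE !INRE /=. Qed.

Lemma vec2E0 a b : vec2 a b 0 0 = a. Proof. by rewrite mxE. Qed.
Lemma vec2E1 a b : vec2 a b 0 1 = b. Proof. by rewrite mxE. Qed.

Ltac noif t := lazymatch t with context[if _ then _ else _] => fail | _ => idtac end.
Ltac splitif := repeat (match goal with
 | |- context [if ?a <= ?b then _ else _] => noif a; noif b; case: (leP a b) => ?
 | |- context [if ?a < ?b then _ else _] => noif a; noif b; case: (ltP a b) => ?
 end; try (exfalso; lra)).

Definition Dfun (p q : RR) : 'rV[RR]_2 :=
  vec2 (2 * relu p - 2 * relu q - relu (2 * p - 1) + relu (4 * q - 2 * p) - relu 0)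
       (2 * relu q - relu (2 * p + 2 * q - 2) + relu (2 * p - 2 * q - 1)).

Lemma D_E s : 0 <= s <= 1 -> Dfun (Emap s 0 0) (Emap s 0 1) = Emap (rmap s).
Proof.
move=> hs; rewrite rmapE //; move/andP: hs => [s0 s1].
rewrite !EmapE; splitif; rewrite !vec2E0 !vec2E1 /Dfun /relu /Order.max; splitif;
  congr vec2; lra.
Qed.

Definition LD : 'M[RR]_(2,7) := \matrix_(i < 2, j < 7)
  nth 0 (if i == 0%N :> nat then [:: 1; 0; 2; -2; 2; 2; 0] else [:: 0; 1; 0; 4; 2; -2; 0]) j.
Definition bD : 'rV[RR]_7 := mk7 0 0 (-1) 0 (-2) (-1) 0.
Definition LI : 'M[RR]_(2,7) := \matrix_(i < 2, j < 7)
  nth 0 (if i == 0%N :> nat then [:: 1/2; 0; 0; 0; 0; 0; 0] else [:: 1/2; 1/2; 0; 0; 0; 0; 0]) j.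
Definition A0 : 'M[RR]_(1,7) := \matrix_(i < 1, j < 7) nth 0 [:: 3/2; 3/2; 3; 3; 6; 3; 3] j.
Definition b0 : 'rV[RR]_7 := mk7 0 0 (-1) 0 (-2) (-2) (-2).

Lemma mulLD p q : vec2 p q *m LD + bD =
  mk7 p q (2 * p - 1) (4 * q - 2 * p) (2 * p + 2 * q - 2) (2 * p - 2 * q - 1) 0.
Proof.
apply/rowP => j; rewrite !mxE !big_ord_recr big_ord0 /= !mxE.
case: j => -[|[|[|[|[|[|[|j]]]]]]] hj /=; try lra; by rewrite !ltnS ltn0 in hj.
Qed.

Lemma mulLI p q : vec2 p q *m LI + 0 = mk7 (p/2 + q/2) (q/2) 0 0 0 0 0.
Proof.
apply/rowP => j; rewrite !mxE !big_ord_recr big_ord0 /= !mxE.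
case: j => -[|[|[|[|[|[|[|j]]]]]]] hj /=; try lra; by rewrite !ltnS ltn0 in hj.
Qed.

Lemma mulA0 (u : 'rV[RR]_1) : u *m A0 + b0 =
  mk7 (3/2 * u 0 0) (3/2 * u 0 0) (3 * u 0 0 - 1) (3 * u 0 0) (6 * u 0 0 - 2)
      (3 * u 0 0 - 2) (3 * u 0 0 - 2).
Proof.
apply/rowP => j; rewrite !mxE big_ord1 /= !mxE.
case: j => -[|[|[|[|[|[|[|j]]]]]]] hj /=; try lra; by rewrite !ltnS ltn0 in hj.
Qed.

Lemma vec2_eta (v : 'rV[RR]_2) : v = vec2 (v 0 0) (v 0 1).
Proof.
apply/rowP => j; rewrite !mxE; case: j => -[|[|j]] hj /=;
  [congr (v _ _); exact: val_inj | congr (v _ _); exact: val_inj | by exfalso; move: (hj); rewrite !ltnS ltn0].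
Qed.

Lemma init_E t : 0 <= t <= 1 ->
  relu_vec (mk7 (3/2 * t) (3/2 * t) (3 * t - 1) (3 * t) (6 * t - 2) (3 * t - 2) (3 * t - 2)) *m Ao
  = Emap t.
Proof.
move=> /andP[t0 t1]; rewrite relu7 mul7Ao EmapE /relu /Order.max; splitif; congr vec2; lra.
Qed.

Lemma I_E p q : 0 <= p -> 0 <= q ->
  relu_vec (mk7 (p/2 + q/2) (q/2) 0 0 0 0 0) *m Ao = vec2 p q.
Proof.
move=> p0 q0; rewrite relu7 mul7Ao /relu /Order.max; splitif; congr vec2; lra.
Qed.

Lemma Emap_ge0 {s} : 0 <= s <= 1 -> 0 <= Emap s 0 0 /\ 0 <= Emap s 0 1.
Proof. move=> /andP[s0 s1]; rewrite EmapE; splitif; rewrite !vec2E0 !vec2E1; split; lra. Qed.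

Lemma rmap01 s : 0 <= s <= 1 -> 0 <= rmap s <= 1.
Proof. move=> hs; rewrite rmapE //; move/andP: hs => [s0 s1]; splitif; apply/andP; split; lra. Qed.

Lemma iter01 k {s} : 0 <= s <= 1 -> 0 <= iter k rmap s <= 1.
Proof. by move=> hs; elim: k => //= k IH; apply: rmap01. Qed.

Definition Ah (n k : nat) : 'M[RR]_(7,7) := if (k < n)%N then Ao *m LD else Ao *m LI.
Definition bh (n k : nat) : 'rV[RR]_7 := if (k < n)%N then bD else 0.

Lemma chain n (u : 'rV[RR]_1) : 0 <= u 0 0 <= 1 -> forall k,
  hidden A0 b0 (Ah n) (bh n) k u *m Ao = Emap (iter (minn k n) rmap (u 0 0)).
Proof.
move=> hu; elim=> [|k IH] /=.
- by rewrite mulA0 min0n /=; exact: init_E.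
- rewrite /Ah /bh; case: ltnP => hk.
  + rewrite mulmxA IH (vec2_eta (Emap _)) mulLD relu7 mul7Ao.
    rewrite (minn_idPl (ltnW hk)) (minn_idPl hk) /=.
    by rewrite -D_E ?iter01.
  + rewrite mulmxA IH (vec2_eta (Emap _)) mulLI.
    have [e0 e1] := Emap_ge0 (iter01 (minn k n) hu).
    rewrite I_E // -vec2_eta.
    by rewrite (minn_idPr hk) (minn_idPr (leqW hk)).
Qed.

Lemma hidden_block d W (A : 'M[RR]_(d,W)) b Ahh bhh k (u v : 'rV[RR]_d) :
  hidden (block_mx A 0 0 A) (row_mx b b) (fun k => block_mx (Ahh k) 0 0 (Ahh k))
    (fun k => row_mx (bhh k) (bhh k)) k (row_mx u v) =
  row_mx (hidden A b Ahh bhh k u) (hidden A b Ahh bhh k v).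
Proof.
elim: k => [|k IH] /=;
  by rewrite ?IH mul_row_block !mulmx0 addr0 add0r add_row_mx /relu_vec map_row_mx.
Qed.

Lemma iterF (F : 'rV[RR]_2 -> 'rV[RR]_2) :
  (forall t : RR, 0 <= t <= 1 -> F (Emap t) = Emap (rmap t)) ->
  forall n t, 0 <= t <= 1 -> iter n F (Emap t) = Emap (iter n rmap t).
Proof.
move=> HF n t ht; elim: n => //= n ->; exact/HF/iter01.
Qed.

Theorem mainTheorem7 :
  forall k : nat,
  exists C0 C1 : nat, (0 < C0)%N /\ (0 < C1)%N /\
  forall F : 'rV[RR]_2 -> 'rV[RR]_2,
    cpwl_pieces k F ->
    (forall t : RR, 0 <= t <= 1 -> F (Emap t) = Emap (rmap t)) ->
    forall n : nat,
      exists g : 'rV[RR]_2 -> 'rV[RR]_4,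
        Upsilon C0 (C1 * maxn n 1)%N 2 4 g /\
        forall x y : RR, 0 <= x <= 1 -> 0 <= y <= 1 ->
          g (vec2 x y) = zn F n x y.
Proof.
move=> k; exists (7 + 7)%N, 2%N; split => //; split => //.
move=> F _ HF n.
pose L' := (2 * maxn n 1).-1.
exists (fun x : 'rV[RR]_(1 + 1) =>
  hidden (block_mx A0 0 0 A0) (row_mx b0 b0) (fun k => block_mx (Ah n k) 0 0 (Ah n k))
    (fun k => row_mx (bh n k) (bh n k)) L' x *m block_mx Ao 0 0 Ao + 0).
have HL : (2 * maxn n 1 = L'.+1)%N.
  by rewrite /L' prednK // muln_gt0 /= leq_max orbT.
split.
- rewrite HL /=.
  by exists (block_mx A0 0 0 A0), (row_mx b0 b0), (fun k => block_mx (Ah n k) 0 0 (Ah n k)),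
    (fun k => row_mx (bh n k) (bh n k)), (block_mx Ao 0 0 Ao), 0.
- move=> x y hx hy.
  have Hv : vec2 x y = row_mx (lsubmx (vec2 x y : 'rV_(1 + 1))) (rsubmx (vec2 x y : 'rV_(1 + 1))).
    by rewrite hsubmxK.
  have Hx : lsubmx (vec2 x y : 'rV_(1 + 1)) 0 0 = x by rewrite !mxE.
  have Hy : rsubmx (vec2 x y : 'rV_(1 + 1)) 0 0 = y by rewrite !mxE.
  have HLn : minn L' n = n.
    apply/minn_idPr; rewrite /L'; lia.
  rewrite /= Hv hidden_block mul_row_block !mulmx0 addr0 add0r addr0.
  rewrite !chain ?Hx ?Hy // HLn /zn !iterF //.
Qed.
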